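(* Let $X$ be a compact metric space, $f_1,f_2:X\to X$ continuous and $F=\{f_1,f_2\}$. The following are equivalent: (1) $F$ has the (Hausdorff metric) shadowing property; (2) $F^k$ has the shadowing property for every integer $k>1$; (3) $F^k$ has the shadowing property for some integer $k>1$.
   Context: Throughout, $(X,d)$ is a compact metric space, $\mathbb{N}=\{0,1,2,\dots\}$. $\mathbb{K}(X)$ is the set of nonempty compact subsets of $X$ with the Hausdorff metric $d_H(A,B)=\max\{\sup_{a\in A}\inf_{b\in B}d(a,b),\sup_{b\in B}\inf_{a\in A}d(a,b)\}$; a point $x$ is identified with $\{x\}$. Multiple mappings: $F=\{f_1,f_2\}$ maps $x$ to $F(x)=\{f_1(x),f_2(x)\}$; for $n\ge1$, $F^n(x)=\{f_{i_1}\cdots f_{i_n}(x): i_1,\dots,i_n\in\{1,2\}\}$, $F^0(x)=\{x\}$; for $A\in\mathbb{K}(X)$, $F^n(A)=\bigcup_{a\in A}F^n(a)$. For $k\ge1$, $F^k$ is regarded as the multiple mappings consisting of the $2^k$ maps $f_{i_1}\cdots f_{i_k}$, so $(F^k)^n=F^{kn}$. Shadowing: for $G=F$ or $G=F^k$, a sequence $\{A_n\}_{n\ge0}\subset\mathbb{K}(X)$ with $A_0$ a singleton is a $\delta$-pseudo orbit of $G$ if $d_H(G(A_n),A_{n+1})\le\delta$ for all $n\in\mathbb{N}$. $G$ has the shadowing property if for every $\epsilon>0$ there is $\delta>0$ such that for every $\delta$-pseudo orbit $\{A_n\}$ of $G$ there is $y\in X$ with $d_H(G^n(y),A_n)<\epsilon$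 for all $n\in\mathbb{N}$. *)

(* Defs.v *)
From mathcomp Require Import all_boot all_order all_algebra.
From mathcomp Require Import classical_sets reals.
From Stdlib Require List.
Set Implicit Arguments. Unset Strict Implicit. Unset Printing Implicit Defensive.
Import Order.TTheory GRing.Theory Num.Theory.
Local Open Scope classical_set_scope.
Local Open Scope ring_scope.

Section Defs.
Variables (R : realType) (X : Type) (d : X -> X -> R).

Definition is_metric : Prop :=
  [/\ (forall x y, 0 <= d x y),
      (forall x y, d x y = 0 <-> x = y),
      (forall x y, d x y = d y x) &
      (forall x y z, d x z <= d x y + d y z)].

Definition mopen (U : set X) : Prop :=
  forall x, U x -> exists2 e : R, 0 < e & forall y, d x y < e -> U y.

Definition mcompact (K : set X) : Prop :=
  forall (I : Type) (U : I -> set X),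
    (forall i, mopen (U i)) ->
    (forall x, K x -> exists i, U i x) ->
    exists s : list I, forall x, K x -> exists i, List.In i s /\ U i x.

Definition mcont (f : X -> X) : Prop :=
  forall x (e : R), 0 < e -> exists2 del : R, 0 < del &
    forall y, d x y < del -> d (f x) (f y) < e.

Definition inK (A : set X) : Prop := (exists x, A x) /\ mcompact A.

Definition dH (A B : set X) : R :=
  Num.max (sup [set inf [set d a b | b in B] | a in A])
          (sup [set inf [set d a b | a in A] | b in B]).

(* A multiple mapping is a finite list of maps G = {g_1,...,g_m}.
   G^n(A) = union over a in A of { g_{i1} ... g_{in} (a) }. *)
Fixpoint mm_iter (G : list (X -> X)) (n : nat) (A : set X) : set X :=
  match n with
  | O => A
  | S n' => fun z => exists f, List.In f G /\
              exists y, mm_iter G n' A y /\ z = f y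
  end.

(* F^k as a multiple mapping: the list of all compositions f_{i1} o ... o f_{ik} *)
Fixpoint mm_pow (G : list (X -> X)) (k : nat) : list (X -> X) :=
  match k with
  | O => [:: id]
  | S k' => [seq (fun x => f (g x)) | f <- G, g <- mm_pow G k']
  end.

Definition pseudo_orbit (G : list (X -> X)) (del : R) (A : nat -> set X) : Prop :=
  [/\ (forall n, inK (A n)),
      (exists x, A 0%N = [set x]) &
      (forall n, dH (mm_iter G 1 (A n)) (A n.+1) <= del)].

Definition shadowing (G : list (X -> X)) : Prop :=
  forall e : R, 0 < e -> exists2 del : R, 0 < del &
    forall A : nat -> set X, pseudo_orbit G del A ->
      exists y : X, forall n, dH (mm_iter G n [set y]) (A n) < e.

End Defs.

(* Main.v *)
Require Import Defs.
From mathcomp Require Import all_boot all_order all_algebra.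
From mathcomp Require Import boolp classical_sets reals.
From Stdlib Require List.
Import Order.TTheory GRing.Theory Num.Theory.
Local Open Scope classical_set_scope.
Local Open Scope ring_scope.

Section Main.
Variables (R : realType) (X : Type) (d : X -> X -> R).
Hypothesis dm : is_metric d.
Hypothesis cX : mcompact d setT.

Lemma d0 x y : 0 <= d x y. Proof. by case: dm. Qed.
Lemma dxx x : d x x = 0. Proof. by case: dm => _ h _ _; apply/h. Qed.
Lemma dsym x y : d x y = d y x. Proof. by case: dm. Qed.
Lemma dtri x y z : d x z <= d x y + d y z. Proof. by case: dm. Qed.

Lemma list_max (T : Type) (s : list T) (g : T -> R) :
  exists m, forall c, List.In c s -> g c <= m.
Proof.
elim: s => [|a s [m Hm]]; first by exists 0.
exists (Num.max (g a) m) => c /= [<-|Hc]; first by rewrite le_max lexx.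
by rewrite le_max Hm // orbT.
Qed.

Lemma list_max2 (T : Type) (s : list T) (g : T -> T -> R) :
  exists m, forall a b, List.In a s -> List.In b s -> g a b <= m.
Proof.
elim: s => [|a s [m Hm]]; first by exists 0.
have [m1 H1] := list_max _ (a :: s) (g a).
have [m2 H2] := list_max _ (a :: s) (fun b => g b a).
exists (Num.max m (Num.max m1 m2)) => x y Hx Hy.
case: Hx => [<-|Hx]; first by rewrite !le_max H1 ?orbT.
case: Hy => [<-|Hy]; first by rewrite !le_max (H2 x) ?orbT //=; right.
by rewrite le_max Hm.
Qed.

Lemma ball_open c r : mopen d [set y | d c y < r].
Proof.
move=> x /= Hx; exists (r - d c x); first by rewrite subr_gt0.
move=> y Hy; apply: (le_lt_trans (dtri c x y)).
by rewrite -ltrBrDl.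
Qed.

Lemma ltr01_dxx x : d x x < 1. Proof. by rewrite dxx. Qed.

Lemma d_bounded : exists M, forall x y, d x y <= M.
Proof.
have [s Hs] := cX X (fun c => [set y | d c y < 1])
  (fun c => ball_open c 1) (fun x _ => ex_intro _ x (ltr01_dxx x)).
have [m Hm] := list_max2 _ s d.
exists (1 + m + 1) => x y.
have [a [Ha Hxa]] := Hs x I; have [b [Hb Hyb]] := Hs y I.
apply: (le_trans (dtri x a y)); rewrite -addrA lerD //; first by rewrite dsym ltW.
apply: (le_trans (dtri a b y)); rewrite lerD // ?Hm //; exact: ltW.
Qed.

Definition Hlt (r : R) (A B : set X) :=
  (forall a, A a -> exists2 b, B b & d a b < r) /\
  (forall b, B b -> exists2 a, A a & d a b < r).

Lemma dH_le (r : R) (A B : set X) : (exists a, A a) -> (exists b, B b) ->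
  Hlt r A B -> dH d A B <= r.
Proof.
move=> [a0 Ha0] [b0 Hb0] [H1 H2]; rewrite /dH ge_max; apply/andP; split.
- apply: ge_sup; first by exists (inf [set d a0 b | b in B]); exists a0.
  move=> _ [a Ha <-]; have [b Hb Hab] := H1 a Ha.
  apply: (le_trans _ (ltW Hab)).
  have : lbound [set d a b | b in B] (inf [set d a b | b in B]).
    apply: ge_inf; exists 0 => _ [z _ <-]; exact: d0.
  by apply; exists b.
- apply: ge_sup; first by exists (inf [set d a b0 | a in A]); exists b0.
  move=> _ [b Hb <-]; have [a Ha Hab] := H2 b Hb.
  apply: (le_trans _ (ltW Hab)).
  have : lbound [set d a b | a in A] (inf [set d a b | a in A]).
    apply: ge_inf; exists 0 => _ [z _ <-]; exact: d0.
  by apply; exists a.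
Qed.

Lemma dH_lt (r : R) (A B : set X) : (exists a, A a) -> (exists b, B b) ->
  dH d A B < r -> Hlt r A B.
Proof.
have [M HM] := d_bounded.
move=> [a0 Ha0] [b0 Hb0]; rewrite /dH gt_max => /andP[L1 L2]; split.
- move=> a Ha.
  have hs : has_sup [set inf [set d a b | b in B] | a in A].
    split; first by exists (inf [set d a0 b | b in B]); exists a0.
    exists M => _ [a' _ <-]; apply: (le_trans _ (HM a' b0)).
    have : lbound [set d a' b | b in B] (inf [set d a' b | b in B]).
      apply: ge_inf; exists 0 => _ [z _ <-]; exact: d0.
    by apply; exists b0.
  have Hle := sup_upper_bound hs (ex_intro2 _ _ a Ha erefl).
  have := inf_lt (ex_intro _ (d a b0) (ex_intro2 _ _ b0 Hb0 erefl)) (le_lt_trans Hle L1).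
  by case=> _ [b Hb <-] H; exists b.
- move=> b Hb.
  have hs : has_sup [set inf [set d a b | a in A] | b in B].
    split; first by exists (inf [set d a b0 | a in A]); exists b0.
    exists M => _ [b' _ <-]; apply: (le_trans _ (HM a0 b')).
    have : lbound [set d a b' | a in A] (inf [set d a b' | a in A]).
      apply: ge_inf; exists 0 => _ [z _ <-]; exact: d0.
    by apply; exists a0.
  have Hle := sup_upper_bound hs (ex_intro2 _ _ b Hb erefl).
  have := inf_lt (ex_intro _ (d a0 b) (ex_intro2 _ _ a0 Ha0 erefl)) (le_lt_trans Hle L2).
  by case=> _ [a Ha <-] H; exists a.
Qed.


Lemma Hlt_refl r A : 0 < r -> Hlt r A A.
Proof. by move=> r0; split=> a Ha; exists a => //; rewrite dxx. Qed.

Lemma Hlt_mono r r' A B : r <= r' -> Hlt r A B -> Hlt r' A B.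
Proof.
move=> rr [H1 H2]; split.
- by move=> a /H1 [b Hb H]; exists b => //; apply: lt_le_trans rr.
- by move=> b /H2 [a Ha H]; exists a => //; apply: lt_le_trans rr.
Qed.

Lemma Hlt_trans r s A B C : Hlt r A B -> Hlt s B C -> Hlt (r + s) A C.
Proof.
move=> [H1 H2] [K1 K2]; split.
- move=> a /H1 [b /K1 [c Hc Hbc] Hab]; exists c => //.
  by apply: (le_lt_trans (dtri a b c)); apply: ltrD.
- move=> c /K2 [b /H2 [a Ha Hab] Hbc]; exists a => //.
  by apply: (le_lt_trans (dtri a b c)); apply: ltrD.
Qed.

Definition UC (f : X -> X) := forall e, 0 < e -> exists2 del, 0 < del &
  forall x y, d x y < del -> d (f x) (f y) < e.

Lemma list_min (T : Type) (s : list T) (g : T -> R) :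
  (forall c, List.In c s -> 0 < g c) ->
  exists2 m, 0 < m & forall c, List.In c s -> m <= g c.
Proof.
elim: s => [|a s IH] H; first by exists 1.
have [m m0 Hm] := IH (fun c Hc => H c (or_intror Hc)).
exists (Num.min (g a) m); first by rewrite lt_min m0 H //=; left.
move=> c /= [<-|Hc]; first by rewrite ge_min lexx.
by rewrite ge_min Hm // orbT.
Qed.

Lemma cont_UC f : mcont d f -> UC f.
Proof.
move=> cf e e0.
pose I := {p : X * R | 0 < p.2 /\ forall y, d p.1 y < p.2 -> d (f p.1) (f y) < e / 2}.
have e20 : 0 < e / 2 by rewrite divr_gt0.
have cov : forall x, [set: X] x -> exists i : I, d (sval i).1 x < (sval i).2 / 2.
  move=> x _; have [del d0 Hd] := cf x (e / 2) e20.
  by exists (exist _ (x, del) (conj d0 Hd)); rewrite /= dxx divr_gt0.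
have [s Hs] := cX I (fun i => [set y | d (sval i).1 y < (sval i).2 / 2])
  (fun i => ball_open _ _) cov.
have [m m0 Hm] : exists2 m, 0 < m & forall i, List.In i s -> m <= (sval i).2 / 2.
  by apply: list_min => -[[x r] [r0 _]] _ /=; rewrite divr_gt0.
exists m => // y z Hyz.
have [i [Hi Hxy]] := Hs y Logic.I.
have Hmi := Hm _ Hi; move: i Hi Hxy Hmi => [[x r] [r0 Hr]] _ /= Hxy Hmi.
have Hxz : d x z < r.
  apply: (le_lt_trans (dtri x y z)); rewrite [r]splitr; apply: ltrD => //.
  exact: lt_le_trans Hmi.
apply: (le_lt_trans (dtri (f y) (f x) (f z))); rewrite [e]splitr dsym.
have r2 : r / 2 < r by rewrite ltr_pdivrMr // ltr_pMr // ltr1n.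
by apply: ltrD; apply: Hr => //; apply: lt_trans r2.
Qed.

Lemma list_UC (G : list (X -> X)) : (forall g, List.In g G -> UC g) ->
  forall e, 0 < e -> exists2 del, 0 < del & forall g, List.In g G ->
    forall x y, d x y < del -> d (g x) (g y) < e.
Proof.
elim: G => [|g G IH] H e e0; first by exists 1.
have [m m0 Hm] := IH (fun c Hc => H c (or_intror Hc)) e e0.
have [m1 m10 Hm1] := H g (or_introl erefl) e e0.
exists (Num.min m1 m); first by rewrite lt_min m0 m10.
move=> h /= [<-|Hh] x y Hxy.
- by apply: Hm1; apply: lt_le_trans Hxy _; rewrite ge_min lexx.
- by apply: Hm => //; apply: lt_le_trans Hxy _; rewrite ge_min lexx orbT.
Qed.

Lemma Hlt_iter1 (G : list (X -> X)) : (forall g, List.In g G -> UC g) ->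
  forall e, 0 < e -> exists2 del, 0 < del & forall A B, Hlt del A B ->
    Hlt e (mm_iter G 1 A) (mm_iter G 1 B).
Proof.
move=> H e e0; have [del d0 Hd] := list_UC _ H e e0.
exists del => // A B [H1 H2]; split.
- move=> _ [g [Hg [a [Ha ->]]]]; have [b Hb Hab] := H1 a Ha.
  by exists (g b); [exists g; split => //; exists b | apply: Hd].
- move=> _ [g [Hg [b [Hb ->]]]]; have [a Ha Hab] := H2 b Hb.
  by exists (g a); [exists g; split => //; exists a | apply: Hd].
Qed.

Lemma Hlt_iter (G : list (X -> X)) : (forall g, List.In g G -> UC g) ->
  forall j e, 0 < e -> exists2 del, 0 < del & forall A B, Hlt del A B ->
    Hlt e (mm_iter G j A) (mm_iter G j B).
Proof.
move=> H; elim=> [|j IH] e e0; first by exists e.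
have [del1 d10 Hd1] := Hlt_iter1 _ H e e0.
have [del d0 Hd] := IH del1 d10.
by exists del => // A B /Hd /Hd1.
Qed.

Lemma fin_min (P : nat -> R -> Prop) :
  (forall j del del', 0 < del' -> del' <= del -> P j del -> P j del') ->
  (forall j, exists2 del, 0 < del & P j del) ->
  forall m, exists2 del, 0 < del & forall j, (j <= m)%N -> P j del.
Proof.
move=> Hmono HP; elim=> [|m [del d0 Hd]].
  have [del d0 Hd] := HP 0%N; exists del => // j; rewrite leqn0 => /eqP ->; exact: Hd.
have [del1 d10 Hd1] := HP m.+1.
have mpos : 0 < Num.min del del1 by rewrite lt_min d0 d10.
exists (Num.min del del1) => // j; rewrite leq_eqVlt => /orP [/eqP ->|Hj].
  by apply: Hmono mpos _ Hd1; rewrite ge_min lexx orbT.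
by apply: Hmono mpos _ (Hd j Hj); rewrite ge_min lexx.
Qed.


Lemma In_cat (T : Type) (x : T) (s1 s2 : seq T) :
  List.In x (s1 ++ s2) <-> List.In x s1 \/ List.In x s2.
Proof.
elim: s1 => [|a s1 IH] /=; first by split; [right|case].
rewrite IH; tauto.
Qed.

Lemma In_map (T U : Type) (f : T -> U) (y : U) (s : seq T) :
  List.In y (map f s) <-> exists x, List.In x s /\ y = f x.
Proof.
elim: s => [|a s IH] /=; first by split; [|case=> ? []].
split.
- case=> [<-|H]; first by exists a; split; [left|].
  have [x [Hx ->]] := proj1 IH H.
  by exists x; split; [right|].
- case=> x [[<-|Hx] Hy]; first by left; rewrite Hy.
  by right; apply: (proj2 IH); exists x.
Qed.

Lemma In_allpairs (T U V : Type) (f : T -> U -> V) (s : seq T) (t : seq U) h :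
  List.In h [seq f a b | a <- s, b <- t] <->
  exists a b, [/\ List.In a s, List.In b t & h = f a b].
Proof.
elim: s => [|a s IH] /=; first by split; [|case=> ? [? []]].
rewrite In_cat In_map IH; split.
- case=> [[b [Hb ->]]|[a' [b [Ha Hb ->]]]].
    by exists a, b; split => //; left.
  by exists a', b; split => //; right.
- case=> a' [b [[<-|Ha] Hb ->]]; first by left; exists b.
  by right; exists a', b.
Qed.

Lemma mm_iter_add (G : list (X -> X)) j m (A : set X) : mm_iter G (j + m) A = mm_iter G j (mm_iter G m A).
Proof. by elim: j => [|j IH] //=; rewrite IH. Qed.

Lemma mm_pow_1 (G : list (X -> X)) k (A : set X) : mm_iter (mm_pow G k) 1 A = mm_iter G k A.
Proof.
elim: k => [|k IH].
  apply: funext => z; apply: propext; split => /=.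
    by case=> f [[<-|[]] [y [Hy ->]]].
  by move=> Hz; exists id; split; [left|exists z].
rewrite /= -IH; apply: funext => z; apply: propext; split.
- case=> h [/In_allpairs [f [g [Hf Hg ->]]] [y [Hy ->]]].
  by exists f; split => //; exists (g y); split => //; exists g; split => //; exists y.
- case=> f [Hf [w [[g [Hg [y [Hy ->]]]] ->]]].
  exists (fun x => f (g x)); split; last by exists y.
  by apply/In_allpairs; exists f, g.
Qed.

Lemma mm_pow_iter (G : list (X -> X)) k n (A : set X) : mm_iter (mm_pow G k) n A = mm_iter G (k * n) A.
Proof.
elim: n => [|n IH]; first by rewrite muln0.
change (mm_iter (mm_pow G k) 1 (mm_iter (mm_pow G k) n A) = mm_iter G (k * n.+1) A).
by rewrite mm_pow_1 IH mulnS mm_iter_add.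
Qed.

Lemma mm_iter_ne (G : list (X -> X)) n (A : set X) : (exists g, List.In g G) -> (exists a, A a) ->
  exists z, mm_iter G n A z.
Proof.
move=> [g Hg] HA; elim: n => [|n [z Hz]] //.
by exists (g z); exists g; split => //; exists z.
Qed.

Lemma preim_open (g : X -> X) (U : set X) : mcont d g -> mopen d U ->
  mopen d (fun x => U (g x)).
Proof.
move=> cg oU x Hx; have [e e0 He] := oU _ Hx.
have [del d0 Hd] := cg x e e0.
by exists del => // y /Hd /He.
Qed.

Lemma compact_iter1 (G : list (X -> X)) (A : set X) :
  (forall g, List.In g G -> mcont d g) -> mcompact d A ->
  mcompact d (mm_iter G 1 A).
Proof.
elim: G => [|g G IH] Hc cA I U oU cov.
  by exists nil => z [f [[] _]].
have cA1 : forall x, A x -> exists i, U i (g x).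
  by move=> x Hx; apply: cov; exists g; split; [left|exists x].
have [s1 Hs1] := cA I (fun i x => U i (g x))
  (fun i => preim_open _ _ (Hc g (or_introl erefl)) (oU i)) cA1.
have [s2 Hs2] := IH (fun h Hh => Hc h (or_intror Hh)) cA I U oU
  (fun z '(ex_intro h (conj Hh Hy)) => cov z (ex_intro _ h (conj (or_intror Hh) Hy))).
exists (s1 ++ s2) => z [h [[<-|Hh] [y [Hy ->]]]].
- by have [i [Hi Hu]] := Hs1 y Hy; exists i; split => //; apply/In_cat; left.
- have [|i [Hi Hu]] := Hs2 (h y); first by exists h; split => //; exists y.
  by exists i; split => //; apply/In_cat; right.
Qed.

Lemma inK_iter (G : list (X -> X)) n (A : set X) :
  (exists g, List.In g G) -> (forall g, List.In g G -> mcont d g) ->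
  inK d A -> inK d (mm_iter G n A).
Proof.
move=> Gne Hc [HA cA]; split; first exact: mm_iter_ne.
elim: n => [|n IH] //.
exact: (compact_iter1 _ (mm_iter G n A) Hc IH).
Qed.


Lemma po_mono (G : list (X -> X)) del del' A : del <= del' ->
  pseudo_orbit d G del A -> pseudo_orbit d G del' A.
Proof.
by move=> dd [H1 H2 H3]; split => // n; apply: le_trans (H3 n) dd.
Qed.

Lemma half_lt (r : R) : 0 < r -> r / 2 < r.
Proof. by move=> r0; rewrite ltr_pdivrMr // ltr_pMr // ltr1n. Qed.

Lemma shad_pow (G : list (X -> X)) k : (0 < k)%N ->
  (exists g, List.In g G) -> (forall g, List.In g G -> mcont d g) ->
  shadowing d G -> shadowing d (mm_pow G k).
Proof.
move=> k0 Gne Gc sh e e0; have [del d0 Hd] := sh e e0.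
exists del => // B [BK [x0 B0] BS].
pose A N := mm_iter G (N %% k)%N (B (N %/ k)%N).
have AK : forall N, inK d (A N) by move=> N; apply: inK_iter.
have [|y Hy] := Hd A.
  split => //; first by exists x0; rewrite /A mod0n div0n.
  move=> N; rewrite /A.
  set q := (N %/ k)%N; set r := (N %% k)%N.
  have NE : N.+1 = (q * k + r.+1)%N by rewrite [in LHS](div.divn_eq N k) addnS.
  have rk : (r < k)%N by rewrite ltn_pmod.
  change (mm_iter G 1 (mm_iter G r (B q))) with (mm_iter G r.+1 (B q)).
  case: (ltnP r.+1 k) => [rk1|kr].
  - rewrite NE modnMDl modn_small // divnMDl // divn_small // addn0.
    have ne : exists z, mm_iter G r.+1 (B q) z.
      by apply: mm_iter_ne => //; case: (BK q).
    by apply: dH_le => //; apply: Hlt_refl.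
  - have rk1 : r.+1 = k by apply/eqP; rewrite eqn_leq kr rk.
    rewrite NE rk1 -mulSnr modnMl mulnK // /=.
    rewrite -mm_pow_1; exact: BS.
exists y => n; have := Hy (k * n)%N.
by rewrite /A mulnC modnMl mulnK // mulnC -mm_pow_iter.
Qed.


Lemma po_Hlt (G : list (X -> X)) : (exists g, List.In g G) ->
  (forall g, List.In g G -> UC g) ->
  forall j t, 0 < t -> exists2 del, 0 < del & forall A, pseudo_orbit d G del A ->
    forall n, Hlt t (mm_iter G j (A n)) (A (j + n)%N).
Proof.
move=> Gne Gu; elim=> [|j IH] t t0.
  by exists t => // A _ n; apply: Hlt_refl.
have t20 : 0 < t / 2 by rewrite divr_gt0.
have [eta1 eta10 He1] := Hlt_iter1 _ Gu _ t20.
have [del1 del10 Hd1] := IH eta1 eta10.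
have mpos : 0 < Num.min del1 (t / 2 / 2) by rewrite lt_min del10 divr_gt0.
exists (Num.min del1 (t / 2 / 2)) => // A PA n.
have PA1 : pseudo_orbit d G del1 A by apply: po_mono PA; rewrite ge_min lexx.
have H1 := He1 _ _ (Hd1 A PA1 n).
have [AK _ AS] := PA.
have H2 : Hlt (t / 2) (mm_iter G 1 (A (j + n)%N)) (A ((j + n).+1)%N).
  apply: dH_lt.
  - by apply: mm_iter_ne => //; case: (AK (j + n)%N).
  - by case: (AK ((j + n).+1)%N).
  - apply: le_lt_trans (AS (j + n)%N) _.
    have h4 := half_lt _ t20.
    by apply: le_lt_trans h4; rewrite ge_min lexx orbT.
rewrite addSn [t]splitr; exact: Hlt_trans H1 H2.
Qed.

Lemma pow_shad (G : list (X -> X)) k : (0 < k)%N ->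
  (exists g, List.In g G) -> (forall g, List.In g G -> UC g) ->
  shadowing d (mm_pow G k) -> shadowing d G.
Proof.
move=> k0 Gne Gu sh e e0.
have e40 : 0 < e / 2 / 2 by rewrite !divr_gt0.
have [eta eta0 Heta] := fin_min
  (fun j del => forall A B, Hlt del A B ->
     Hlt (e / 2 / 2) (mm_iter G j A) (mm_iter G j B))
  (fun j del del' _ dd H A B HAB => H A B (Hlt_mono _ _ _ _ dd HAB))
  (fun j => Hlt_iter _ Gu j _ e40) k.
have [del' del'0 Hd'] := sh eta eta0.
have t0 : 0 < Num.min (e / 2 / 2) del' by rewrite lt_min e40.
have [del del0 Hdel] := fin_min
  (fun j del => forall A, pseudo_orbit d G del A ->
    forall n, Hlt (Num.min (e / 2 / 2) del') (mm_iter G j (A n)) (A (j + n)%N))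
  (fun j del del'' _ dd H A PA => H A (po_mono _ _ _ _ dd PA))
  (fun j => po_Hlt _ Gne Gu j _ t0) k.
exists del => // A PA.
have [AK [x0 A0] AS] := PA.
have Ane : forall n, exists z, A n z by move=> n; case: (AK n).
have [|y Hy] := Hd' (fun n => A (k * n)%N).
  split => //; first by exists x0; rewrite muln0.
  move=> n; rewrite mm_pow_1 mulnS.
  apply: dH_le; first by apply: mm_iter_ne.
    exact: Ane.
  by apply: Hlt_mono (Hdel k (leqnn k) A PA (k * n)%N); rewrite ge_min lexx orbT.
exists y => N.
have NE : N = ((N %% k) + k * (N %/ k))%N by rewrite addnC mulnC -div.divn_eq.
have jk : ((N %% k) <= k)%N by rewrite ltnW // ltn_pmod.
set j := (N %% k)%N in NE jk; set n := (N %/ k)%N in NE.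
rewrite NE mm_iter_add -mm_pow_iter.
have H0 := Hy n.
have H1 : Hlt eta (mm_iter (mm_pow G k) n [set y]) (A (k * n)%N).
  by apply: dH_lt => //; rewrite mm_pow_iter; apply: mm_iter_ne => //; exists y.
have H2 := Heta j jk _ _ H1.
have H3 := Hdel j jk A PA (k * n)%N.
apply: le_lt_trans (half_lt _ e0); apply: dH_le.
- by rewrite mm_pow_iter -mm_iter_add; apply: mm_iter_ne => //; exists y.
- exact: Ane.
rewrite [e / 2]splitr; apply: Hlt_trans H2 (Hlt_mono _ _ _ _ _ H3).
by rewrite ge_min lexx.
Qed.

End Main.

Theorem theorem4p1 (R : realType) (X : Type) (d : X -> X -> R) (f1 f2 : X -> X) :
  is_metric d -> mcompact d setT -> mcont d f1 -> mcont d f2 ->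
  let F := [:: f1; f2] in
  (shadowing d F <-> (forall k : nat, (1 < k)%N -> shadowing d (mm_pow F k))) /\
  ((forall k : nat, (1 < k)%N -> shadowing d (mm_pow F k)) <->
   (exists2 k : nat, (1 < k)%N & shadowing d (mm_pow F k))).
Proof.
move=> dm cX c1 c2 F.
have Fne : exists g, List.In g F by exists f1; left.
have Fc : forall g, List.In g F -> mcont d g.
  by move=> g [<-|[<-|[]]].
have Fu : forall g, List.In g F -> @UC R X d g.
  by move=> g Hg; exact: (@cont_UC R X d dm cX g (Fc g Hg)).
have P1 : forall k, (0 < k)%N -> shadowing d F -> shadowing d (mm_pow F k).
  by move=> k k0; exact: (@shad_pow R X d dm F k k0 Fne Fc).
have P2 : forall k, (0 < k)%N -> shadowing d (mm_pow F k) -> shadowing d F.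
  by move=> k k0; exact: (@pow_shad R X d dm cX F k k0 Fne Fu).
split; split.
- by move=> sh k k1; apply: P1 => //; apply: ltnW.
- by move=> H; apply: (P2 2%N) => //; apply: H.
- by move=> H; exists 2%N => //; apply: H.
- by case=> k k1 sh k' k'1; apply: P1; [apply: ltnW | apply: (P2 k) => //; apply: ltnW].
Qed.
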